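(* Let $X$ be a shift space, $k\in\mathbb{N}$, and $\mathcal{C}=(C_n)_{n\in\mathbb{N}}$ with $C_n\subseteq\mathcal{L}(X,[1,nk]^d)$ a collection with entropy $h(\mathcal{C})>0$. Let $r\in\mathbb{N}$. Then there is a collection $\mathcal{C}'=(C_n')_{n\in\mathbb{N}}$ with $C_n'\subseteq C_n$ such that $h(\mathcal{C}')=h(\mathcal{C})$ and for all $n$, all $a\in C_n'$ and all $\gamma\in[-r,r]^d\setminus\{\bar 0\}$, $a$ clashes with $\sigma^\gamma(a)$.
   Context: $X\subseteq\mathcal{A}^{\mathbb{Z}^d}$ is closed and shift-invariant ($\mathcal{A}$ finite); $\mathcal{L}(X,B)=\{x|_B:x\in X\}$. For a pattern $a$ on $B$, $\sigma^\gamma(a)$ is the pattern on $B-\gamma$ given by $(\sigma^\gamma a)_\delta=a_{\gamma+\delta}$. Patterns $a,b$ clash if some site $\gamma$ in both domains has $a_\gamma\ne b_\gamma$. The entropy of $\mathcal{C}=(C_n)$ is $h(\mathcal{C})=\liminf_{n\to\infty}(nk)^{-d}\log|C_n|$. *)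

(* Defs.v *)
From mathcomp Require Import all_boot all_order all_algebra.
From mathcomp Require Import all_classical all_reals all_analysis.
Set Implicit Arguments. Unset Strict Implicit. Unset Printing Implicit Defensive.
Import Order.TTheory GRing.Theory Num.Theory.
Local Open Scope ring_scope.

Section Shifts.
Variables (d : nat) (A : finType).

Definition site := 'rV[int]_d.
Definition config := site -> A.
(* a pattern with arbitrary domain: the domain is {g | a g <> None} *)
Definition pattern := site -> option A.

Definition shift_config (g : site) (x : config) : config := fun delta => x (g + delta).

Definition shift_pat (g : site) (a : pattern) : pattern := fun delta => a (g + delta).

Definition clash (a b : pattern) : Prop :=
  exists delta u v, a delta = Some u /\ b delta = Some v /\ u <> v.

(* X closed in the product topology (A discrete) *)
Definition closed_config_set (X : config -> Prop) : Prop :=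
  forall x : config,
    (forall N : nat, exists y, X y /\
        forall delta : site, (forall i, `|delta 0 i| <= N%:Z) -> y delta = x delta) ->
    X x.

Definition shift_space (X : config -> Prop) : Prop :=
  closed_config_set X /\ forall (g : site) x, X x -> X (shift_config g x).

(* the box [1,m]^d, indexed by b : 'I_d -> 'I_m, b i representing b i + 1 *)
Definition box (m : nat) := {ffun 'I_d -> 'I_m}.
Definition box_site m (b : box m) : site := \row_i ((b i).+1 : nat)%:Z.

Definition box_pat (m : nat) := {ffun box m -> A}.

Definition ext m (a : box_pat m) : pattern :=
  fun delta => match [pick b : box m | box_site b == delta] with
               | Some b => Some (a b) | None => None end.

Definition in_lang (X : config -> Prop) m (a : box_pat m) : Prop :=
  exists x, X x /\ forall b : box m, a b = x (box_site b).

Definition entropy (R : realType) (k : nat) (C : forall n : nat, {set box_pat (n * k)}) : R :=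
  limn_inf (fun n : nat => ln (#|C n|%:R : R) / (((n * k) ^ d)%N%:R)).

End Shifts.

(* Main.v *)
Require Import Defs.
From mathcomp Require Import all_boot all_order all_algebra.
From mathcomp Require Import all_classical all_reals all_analysis.
From mathcomp Require Import zify ring.
Import Order.TTheory GRing.Theory Num.Theory.
Local Open Scope ring_scope.

Module Helpers.
Set Implicit Arguments. Unset Strict Implicit. Unset Printing Implicit Defensive.
Lemma pow_diff (s t m n : nat) : (s <= m)%N -> (m <= s + t)%N ->
  (m ^ n.+1 <= s ^ n.+1 + n.+1 * t * m ^ n)%N.
Proof.
move=> sm mst; elim: n => [|n IH]; first by rewrite !expn1 expn0; lia.
have h1 : (s ^ n.+1 <= m ^ n.+1)%N by rewrite leq_exp2r.
have h2 := leq_mul (leqnn m) IH.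
have h3 := leq_mul mst (leqnn (s ^ n.+1)).
have h4 := leq_mul (leqnn t) h1.
rewrite mulnDr in h2.
have e : (m * (n.+1 * t * m ^ n) = n.+1 * t * m ^ n.+1)%N by rewrite expnS; ring.
rewrite e in h2.
rewrite mulnDl in h3.
rewrite !(expnS _ n.+1).
have -> : (n.+2 * t * m ^ n.+1 = n.+1 * t * m ^ n.+1 + t * m ^ n.+1)%N by ring.
move: h2 h3 h4; generalize (m * m ^ n.+1)%N (n.+1 * t * m ^ n.+1)%N (m * s ^ n.+1)%N (s * s ^ n.+1)%N (t * s ^ n.+1)%N (t * m ^ n.+1)%N.
move=> *; lia.
Qed.

Section Comb.
Variables (d : nat) (A : finType) (m r : nat).

Lemma box_site_inj : injective (@box_site d m).
Proof.
move=> b b' H; apply/ffunP => i; apply/val_inj.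
have := congr1 (fun M : site d => M 0 i) H; rewrite !mxE /=.
by case=> ->.
Qed.

Lemma ext_site (a : box_pat d A m) b : ext a (box_site b) = Some (a b).
Proof.
rewrite /ext; case: pickP => [b' /eqP /box_site_inj -> //|H].
by have := H b; rewrite eqxx.
Qed.

Definition gT := {ffun 'I_d -> 'I_(2 * r).+1}.

Definition per (t : gT) (a : box_pat d A m) : bool :=
  [forall b1 : box d m, forall b2 : box d m,
    [forall i, ((b2 i)%:Z == (t i)%:Z - r%:Z + (b1 i)%:Z)] ==> (a b1 == a b2)].

Definition nz (t : gT) : bool := [exists i, (t i : nat) != r].

Definition bad (a : box_pat d A m) : bool := [exists t, nz t && per t a].

Lemma clash_of_notbad (a : box_pat d A m) (g : site d) :
  ~~ bad a -> g != 0 -> (forall i, `|g 0 i| <= r%:Z) ->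
  clash (ext a) (shift_pat g (ext a)).
Proof.
move=> nb g0 gr.
have ht (i : 'I_d) : (absz (g 0 i + r%:Z)%R < (2 * r).+1)%N.
  have := gr i; rewrite ler_norml => /andP[h1 h2].
lia.
pose t : gT := [ffun i => Ordinal (ht i)].
have tE (i : 'I_d) : (t i)%:Z = g 0 i + r%:Z.
  rewrite ffunE /=; have := gr i; rewrite ler_norml => /andP[h1 h2]; lia.
have nzt : nz t.
  case nzt: (nz t) => //; have : ~~ nz t by rewrite nzt.
  rewrite negb_exists => /forallP H; move/eqP: g0; case.
  apply/matrixP => i j; have -> : i = 0 by apply: ord1.
rewrite mxE.
  have := H j; rewrite negbK => /eqP h; have := tE j; rewrite h => e.
  by apply: (@addIr _ r%:Z); rewrite add0r; apply/esym.
have : ~~ per t a by move: nb; rewrite /bad negb_exists => /forallP /(_ t); rewrite nzt.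
rewrite /per negb_forall => /existsP [b1]; rewrite negb_forall => /existsP [b2].
rewrite negb_imply => /andP [/forallP Hrel Hne].
exists (box_site b1), (a b1), (a b2); split; first exact: ext_site.
split; last by move/eqP: Hne.
rewrite /shift_pat; have -> : g + box_site b1 = box_site b2.
  apply/matrixP => i j; have -> : i = 0 by apply: ord1.
rewrite !mxE; have := Hrel j; rewrite tE => /eqP e.
  rewrite !intS e; ring.
exact: ext_site.
Qed.

Lemma inner_lt (c : {ffun 'I_d -> 'I_(m - 2 * r)}) i : (c i + r < m)%N.
Proof. have := ltn_ord (c i); lia. Qed.
Definition innerf (c : {ffun 'I_d -> 'I_(m - 2 * r)}) : box d m :=
  [ffun i => Ordinal (inner_lt c i)].
Lemma innerf_inj : injective innerf.
Proof.
move=> c c' H; apply/ffunP => i; apply/val_inj.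
have := congr1 (fun b : box d m => (b i : nat)) H; rewrite !ffunE /=; lia.
Qed.
Definition layer : {set box d m} := ~: [set innerf c | c : {ffun 'I_d -> 'I_(m - 2 * r)}].

Lemma card_layer : (#|layer| + (m - 2 * r) ^ d = m ^ d)%N.
Proof.
have := cardsC [set innerf c | c : {ffun 'I_d -> 'I_(m - 2 * r)}].
rewrite card_imset; last exact: innerf_inj.
by rewrite !card_ffun !card_ord /layer addnC.
Qed.

Lemma per_det t (a a' : box_pat d A m) : nz t -> per t a -> per t a' ->
  {in layer, a =1 a'} -> a = a'.
Proof.
move=> /existsP [i0 hi0] pa pa' hL.
pose mu (b : box d m) := if (r < t i0)%N then (b i0 : nat) else (m - b i0)%N.
suff H : forall n b, (mu b <= n)%N -> a b = a' b.
  by apply/ffunP => b; apply: (H (mu b)).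
elim=> [|n IH] b hb.
all: case: (boolP (b \in layer)) => [/hL //|].
all: rewrite /layer finset.in_setC negbK => /imsetP [c _ eb]; subst b.
all: have hc i : ((c i + r) + r - t i < m)%N by have := ltn_ord (c i); have := ltn_ord (t i); lia.
all: pose b' : box d m := [ffun i => Ordinal (hc i)].
all: have rel : [forall i, ((innerf c i)%:Z == (t i)%:Z - r%:Z + (b' i)%:Z)]
   by apply/forallP => i; rewrite !ffunE /=; apply/eqP; have := ltn_ord (t i); have := ltn_ord (c i); lia.
all: have e1 : a b' = a (innerf c) by
    move/forallP: pa => /(_ b') /forallP /(_ (innerf c)) /implyP /(_ rel) /eqP.
all: have e2 : a' b' = a' (innerf c) by
    move/forallP: pa' => /(_ b') /forallP /(_ (innerf c)) /implyP /(_ rel) /eqP.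
all: have E1 : (b' i0 : nat) = (c i0 + r + r - t i0)%N by rewrite ffunE.
all: have E2 : (innerf c i0 : nat) = (c i0 + r)%N by rewrite ffunE.
all: have lt : (mu b' < mu (innerf c))%N by
  move: hi0; rewrite /mu /= E1 E2; have := ltn_ord (c i0); have := ltn_ord (t i0);
  case: (ltnP r (t i0)) => h1 h2 h3 /eqP h5; lia.
- by move: hb; rewrite leqn0 => /eqP; move: lt => /[swap] ->.
- rewrite -e1 -e2; apply: IH; rewrite -ltnS; exact: leq_trans lt hb.
Qed.

Lemma card_bad : (#|[set a | bad a]| <= ((2 * r).+1 ^ d) * #|A| ^ #|layer|)%N.
Proof.
pose t0 : gT := [ffun _ => ord0].
pose F (a : box_pat d A m) : gT * {ffun {x : box d m | x \in layer} -> A} :=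
  (odflt t0 [pick t | nz t && per t a], [ffun x => a (val x)]).
have inj : {in [set a | bad a] &, injective F}.
  move=> a a'; rewrite !inE => /existsP [t1 ht1] /existsP [t2 ht2] [].
  case: pickP => [t /andP [nzt pt]|]; last by move=> /(_ t1); rewrite ht1.
  case: pickP => [t' /andP [nzt' pt'] /= e|]; last by move=> /(_ t2); rewrite ht2.
  subst t' => eF; apply: (per_det nzt pt pt') => x hx.
  by move/ffunP: eF => /(_ (exist _ x hx)); rewrite !ffunE.
rewrite -(card_in_imset inj).
apply: leq_trans (max_card _) _.
by rewrite card_prod card_ffun card_ord card_ffun card_sig card_ord.
Qed.

End Comb.


Lemma bad_le (d' : nat) (A : finType) m r : (0 < m)%N ->
  (2 * #|[set a : box_pat d'.+1 A m | bad r a]| <=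
   (2 * (2 * r).+1 ^ d'.+1 * (#|A| + 1) ^ (d'.+1 * (2 * r))) ^ (m ^ d'))%N.
Proof.
move=> m0.
have hL : (#|layer d'.+1 m r| <= d'.+1 * (2 * r) * m ^ d')%N.
  have := card_layer d'.+1 m r.
  have := @pow_diff (m - 2 * r) (2 * r) m d' (leq_subr _ _) ltac:(lia).
  move: (m ^ d'.+1)%N ((m - 2 * r) ^ d'.+1)%N => *; lia.
have Q0 : (0 < m ^ d')%N by rewrite expn_gt0 m0.
have hA : (#|A| ^ #|layer d'.+1 m r| <= (#|A| + 1) ^ (d'.+1 * (2 * r) * m ^ d'))%N.
  apply: (@leq_trans ((#|A| + 1) ^ #|layer d'.+1 m r|)).
    case: (posnP #|layer d'.+1 m r|) => [->//|h]; rewrite leq_exp2r //; lia.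
  by apply: leq_pexp2l => //; lia.
have hB := card_bad d'.+1 A m r.
rewrite expnMn.
have h2 : (2 * (2 * r).+1 ^ d'.+1 <= (2 * (2 * r).+1 ^ d'.+1) ^ (m ^ d'))%N.
  rewrite -{1}(expn1 (2 * _)); apply: leq_pexp2l; [by rewrite muln_gt0 expn_gt0 | exact: Q0].
rewrite -expnM.
apply: (@leq_trans (2 * (2 * r).+1 ^ d'.+1 * (#|A| + 1) ^ (d'.+1 * (2 * r) * m ^ d'))).
  rewrite -mulnA leq_mul2l /=; apply: leq_trans hB _; rewrite leq_mul2l; apply/orP; right; exact: hA.
by rewrite leq_mul2r h2 orbT.
Qed.

Section RealL.
Local Open Scope classical_set_scope.
Variable R : realType.

Lemma bounded_of (u : R^o^nat) (B : R) : (forall n, `|u n| <= B) -> bounded_fun u.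
Proof.
move=> hB; exists `|B|; split; first exact: normr_real.
move=> M hM n _ /=; apply: le_trans (hB n) _; apply: le_trans (ltW hM).
exact: ler_norm.
Qed.

Lemma liminf_eq (u v : R^o^nat) : bounded_fun u -> bounded_fun v ->
  (v - u) @ \oo --> (0 : R^o) -> limn_inf v = limn_inf u.
Proof.
move=> bu bv cw.
have bw : bounded_fun (v - u) by apply: bounded_funD => //; exact: bounded_funN.
have l0 : limn_inf (v - u) = 0 by have [-> _] := cvg_limn_inf_sup cw.
have cw' : (- (v - u)) @ \oo --> (0 : R^o).
  by rewrite -oppr0; apply: cvgN.
have l0' : limn_inf (- (v - u)) = 0 by have [-> _] := cvg_limn_inf_sup cw'.
apply/eqP; rewrite eq_le; apply/andP; split.
- have := le_limn_infD bv (bounded_funN bw); rewrite l0' addr0.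
  have -> : v \+ - (v - u) = u by apply/funext => n /=; rewrite opprB addrC subrK.
  by [].
- have := le_limn_infD bu bw; rewrite l0 addr0.
  have -> : u \+ (v - u) = v by apply/funext => n /=; rewrite addrC subrK.
  by [].
Qed.

Lemma ev_pos (u : R^o^nat) : bounded_fun u -> 0 < limn_inf u ->
  exists c : R, 0 < c /\ exists N, forall n, (N <= n)%N -> c <= u n.
Proof.
move=> bu hp; rewrite limn_infE // in hp.
have [y [N _ <-] hy] := sup_gt (ex_intro _ (infs u 0) (ex_intro2 _ _ 0%N I erefl)) hp.
exists (infs u N); split => //; exists N => n hn.
apply: ge_inf; first exact/has_lbound_sdrop/bounded_fun_has_lbound.
by exists n.
Qed.

Lemma cvg0 (w : R^o^nat) (K : R) N : (forall n, (N <= n)%N -> `|w n| <= K / n%:R) ->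
  w @ \oo --> (0 : R^o).
Proof.
move=> hw; apply/cvgrPdist_lt => e e0.
exists (maxn N.+1 (Num.truncn (K / e)).+1) => // n /= hn.
rewrite sub0r normrN; apply: le_lt_trans (hw n _) _.
  by apply: leq_trans hn; apply: leq_trans (leq_maxl _ _).
have n0 : (0 < n)%N by apply: leq_trans hn; apply: leq_trans (leq_maxl _ _).
rewrite ltr_pdivrMr ?ltr0n // mulrC -ltr_pdivrMr //.
apply: lt_le_trans (truncnS_gt _) _.
rewrite ler_nat; apply: leq_trans hn; exact: leq_maxr.
Qed.

End RealL.

Lemma ent_bound (R : realType) d (A : finType) m (S : {set box_pat d A m}) :
  0 <= ln (#|S|%:R : R) / ((m ^ d)%N%:R) <= ln ((#|A| + 1)%N%:R : R).
Proof.
have lnA : 0 <= ln ((#|A| + 1)%N%:R : R) by apply: ln_ge0; rewrite ler1n addn1.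
have hS : (#|S| <= (#|A| + 1) ^ (m ^ d))%N.
  apply: leq_trans (max_card _) _; rewrite !card_ffun !card_ord.
  case: (posnP (m ^ d)%N) => [->//|h]; rewrite leq_exp2r //; lia.
case: (posnP #|S|) => [->|S0].
  by rewrite ln0 // mul0r lexx lnA.
case: (posnP (m ^ d)%N) => [->|P0].
  by rewrite invr0 mulr0 lexx lnA.
have lnS : 0 <= ln (#|S|%:R : R) by apply: ln_ge0; rewrite ler1n.
apply/andP; split; first by apply: divr_ge0.
rewrite ler_pdivrMr ?ltr0n //.
apply: (@le_trans _ _ (ln (((#|A| + 1) ^ (m ^ d))%N%:R : R))).
  rewrite ler_ln ?ler_nat // posrE ltr0n // expn_gt0 addn1 //.
by rewrite natrX lnXn ?ltr0n ?addn1 // mulr_natr.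
Qed.

End Helpers.
Import Helpers.
Unset Implicit Arguments. Set Strict Implicit. Set Printing Implicit Defensive.

Theorem lemma8p2 (R : realType) (d : nat) (A : finType) (X : config d A -> Prop)
  (k : nat) (C : forall n : nat, {set box_pat d A (n * k)})
  (hX : shift_space X)
  (hC : forall n (a : box_pat d A (n * k)), a \in C n -> in_lang X a)
  (hpos : 0 < entropy R C) (r : nat) :
  exists C' : forall n : nat, {set box_pat d A (n * k)},
    (forall n, C' n \subset C n) /\
    entropy R C' = entropy R C /\
    (forall n (a : box_pat d A (n * k)) (g : site d),
        a \in C' n -> g != 0 -> (forall i, `|g 0 i| <= r%:Z) ->
        clash (ext a) (shift_pat g (ext a))).
Proof.
destruct d as [|d'].
  exists C; split; first by move=> n; exact: subxx.
  split; first by [].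
  move=> n a g _ g0; exfalso; move/eqP: g0; apply; apply/matrixP => i [j hj].
  by [].
destruct k as [|k'].
  exfalso; move: hpos; rewrite /entropy.
  have -> : (fun n : nat => ln (#|C n|%:R : R) / (((n * 0) ^ d'.+1)%N%:R)) = (fun _ => 0).
    apply/funext => n; rewrite (_ : ((n * 0) ^ d'.+1)%N = 0%N) ?invr0 ?mulr0 //.
    by rewrite muln0 exp0n.
  have cz : ((fun _ : nat => (0:R^o)) @ \oo --> (0:R^o))%classic by apply: cvg_cst.
  have [-> _] := cvg_limn_inf_sup cz.
  by rewrite ltxx.
exists (fun n => C n :\: [set a | bad r a]).
split; first by move=> n; apply: subsetDl.
split; last first.
  move=> n a g /setDP [_] nb; apply: clash_of_notbad; move: nb; apply: contra => hb.
  first [by rewrite inE | by rewrite finset.inE | by rewrite in_set | by rewrite finset.in_set].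

rewrite /entropy.
have bnd (n : nat) (S : {set box_pat d'.+1 A (n * k'.+1)}) :
    `|ln (#|S|%:R : R) / (((n * k'.+1) ^ d'.+1)%N%:R)| <= ln ((#|A| + 1)%N%:R : R).
  have /andP [h1 h2] := ent_bound R S; by rewrite ger0_norm.
have bu := bounded_of (fun n => bnd n (C n)).
have bv := bounded_of (fun n => bnd n (C n :\: [set a | bad r a])).
apply: liminf_eq => //.
have [c [c0 [N0 hN0]]] := ev_pos bu hpos.
pose M := (2 * (2 * r).+1 ^ d'.+1 * (#|A| + 1) ^ (d'.+1 * (2 * r)))%N.
pose N1 := (Num.truncn (ln (M%:R : R) / c)).+1.
apply: (@cvg0 _ _ (ln 2) (maxn 1 (maxn N0 N1))) => n hn.
have n1 : (1 <= n)%N by apply: leq_trans hn; apply: leq_maxl.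
have hn0 : (N0 <= n)%N by apply: leq_trans hn; apply: leq_trans (leq_maxr _ _); apply: leq_maxl.
have hn1 : (N1 <= n)%N by apply: leq_trans hn; apply: leq_trans (leq_maxr _ _); apply: leq_maxr.
have hu := hN0 n hn0; simpl in hu.
rewrite /=.
have mn : (n <= n * k'.+1)%N by rewrite leq_pmulr.
have m0 : (0 < n * k'.+1)%N by rewrite muln_gt0 n1.
have P0 : (0 < (n * k'.+1) ^ d'.+1)%N by rewrite expn_gt0 m0.
have nP : (n <= (n * k'.+1) ^ d'.+1)%N.
  apply: leq_trans mn _; rewrite -{1}(expn1 (n * k'.+1)); exact: leq_pexp2l.
have hu' : c * ((n * k'.+1) ^ d'.+1)%N%:R <= ln (#|C n|%:R : R).
  by rewrite -ler_pdivlMr ?ltr0n.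
have M0 : (0 < M)%N by rewrite /M !muln_gt0 !expn_gt0 addn1.
have hM : ln (M%:R : R) <= c * (n * k'.+1)%N%:R.
  rewrite mulrC -ler_pdivrMr //; apply/ltW; apply: lt_le_trans (truncnS_gt _) _.
  rewrite ler_nat; apply: leq_trans hn1 mn.
have Cpos : (0 < #|C n|)%N.
  case: (posnP #|C n|) => // h; move: hu'; rewrite h ln0 // => h'.
  have : 0 < c * ((n * k'.+1) ^ d'.+1)%N%:R by rewrite mulr_gt0 // ltr0n.
  by rewrite ltNge h'.
have key : (M ^ ((n * k'.+1) ^ d') <= #|C n|)%N.
  rewrite -(ler_nat R) -ler_ln ?posrE ?ltr0n ?expn_gt0 ?M0 //.
  rewrite natrX lnXn ?ltr0n // -[ln (M%:R) *+ _]mulr_natr.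
  apply: le_trans hu'.
  rewrite expnS natrM mulrA; apply: ler_wpM2r => //.
have hb := @bad_le d' A (n * k'.+1) r m0.
rewrite -/M in hb.
set B := [set a | bad r a] in hb *.
have hI := subset_leq_card (subsetIr (C n) B).
have hx : (2 * #|C n :&: B| <= #|C n|)%N.
  apply: leq_trans key; apply: leq_trans hb; by rewrite leq_mul2l hI orbT.
have hc' : (#|C n| <= 2 * #|C n :\: B|)%N.
  rewrite cardsD; move: hx; move: #|C n :&: B| #|C n| => x y; lia.
have a1le : (#|C n :\: B| <= #|C n|)%N by apply: subset_leq_card; apply: subsetDl.
have a1pos : (0 < #|C n :\: B|)%N by lia.
move: hc' a1le a1pos; set a1 := #|C n :\: B|; set a0 := #|C n|.
move=> hc' a1le a1pos.
set P := ((n * k'.+1) ^ d'.+1)%N.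
have H : `|ln (a1%:R : R) / P%:R - ln (a0%:R : R) / P%:R| <= ln 2 / n%:R.
  have la : ln (a1%:R : R) <= ln (a0%:R : R).
    by rewrite ler_ln ?posrE ?ltr0n ?ler_nat //; lia.
  have l2 : ln (a0%:R : R) <= ln 2 + ln (a1%:R : R).
    rewrite -lnM ?posrE ?ltr0n //.
    rewrite ler_ln ?posrE ?ltr0n.
    - by rewrite -natrM ler_nat.
    - exact: Cpos.
    - by rewrite mulr_gt0 // ltr0n.
  rewrite -mulrBl normrM ler0_norm ?subr_le0 // opprB (ger0_norm (x := P%:R^-1)) ?invr_ge0 ?ler0n //.
  apply: ler_pM.
  - by rewrite subr_ge0.
  - by rewrite invr_ge0 ler0n.
  - by rewrite lerBlDr.
  - by rewrite lef_pV2 ?posrE ?ltr0n ?ler_nat.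
exact: H.
Qed.
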